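(* Let $n\ge 2$ and let $\mathsf u$ be a subword of $\bm\lambda_n$ with $u_1u_2\cdots u_{n(n-1)}=e$. Then for every integer $k$ and all integers $a,b$ with $0\le b-a<n(n-1)$, $$\big|(u_au_{a+1}\cdots u_b)(k)-k\big|\le n-2,$$ where indices of $\mathsf u$ are taken modulo $n(n-1)$ (i.e. $u_i:=u_{i'}$ with $1\le i'\le n(n-1)$, $i'\equiv i\pmod{n(n-1)}$).
   Context: $\widetilde S_n$ is the group, under composition, of bijections $w:\mathbb Z\to\mathbb Z$ with $w(i+n)=w(i)+n$ and $\sum_{i=1}^n w(i)=\binom{n+1}2$; $s_i=(\!(i,i+1)\!)$ for $i\in\{0,\dots,n-1\}$, where $(\!(i,j)\!)$ swaps $i+kn$ and $j+kn$ for all $k\in\mathbb Z$. $\bm\lambda_n$ is the word $[s_0,\dots,s_{n-1}]$ repeated $n-1$ times, with $j$-th letter $\sigma_j=s_{(j-1)\bmod n}$ (index in $\{0,\dots,n-1\}$). A subword is $\mathsf u=[u_1,\dots,u_{n(n-1)}]$ with each $u_j\in\{\sigma_j,e\}$. *)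

(* Defs.v *)
From mathcomp Require Import all_boot all_order all_algebra.
Set Implicit Arguments. Unset Strict Implicit. Unset Printing Implicit Defensive.
Import Order.TTheory GRing.Theory Num.Theory.
Local Open Scope ring_scope.

(* The affine simple transposition s_i = ((i, i+1)) of Z (period n),
   for 0 <= i < n: swaps i + kn and i + 1 + kn for every k. *)
Definition s_aff (n i : nat) (x : int) : int :=
  if (x %% n%:Z)%Z == i%:Z then x + 1
  else if (x %% n%:Z)%Z == ((i.+1 %% n)%N)%:Z then x - 1
  else x.

(* A subword of lambda_n is encoded by a bit sequence u of length n(n-1):
   the letter u_j (1 <= j <= n(n-1)) is sigma_j = s_{(j-1) mod n} if the
   (j-1)-th bit is true, and e otherwise.  letter n u j is u_j for an
   arbitrary integer j, with the index taken modulo n(n-1). *)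
Definition letter (n : nat) (u : seq bool) (j : int) : int -> int :=
  let jj := absz ((j - 1) %% (n * n.-1)%:Z)%Z in
  if nth false u jj then s_aff n (jj %% n) else id.

(* word_prod n u a m = u_a u_{a+1} ... u_{a+m-1} (composition, rightmost
   factor applied first). *)
Fixpoint word_prod (n : nat) (u : seq bool) (a : int) (m : nat) : int -> int :=
  match m with
  | 0 => id
  | m'.+1 => fun x => letter n u a (word_prod n u (a + 1) m' x)
  end.

(* Main.v *)
Require Import Defs.
From mathcomp Require Import all_boot all_order all_algebra.
From mathcomp Require Import zify ring.
Import Order.TTheory GRing.Theory Num.Theory.
Local Open Scope ring_scope.
Definition Kf (n : nat) (b z : int) : int := ((z - b - 1) %/ n%:Z)%Z.
Lemma K_down n b z : (1 < n)%N -> (n%:Z %| z - b)%Z ->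
  Kf n b (z + 1) = Kf n b z + 1.
Proof.
move=> n1 /dvdzP [q hq]; rewrite /Kf.
have -> : z + 1 - b - 1 = q * n%:Z by rewrite -hq; ring.
have -> : z - b - 1 = (q - 1) * n%:Z + (n%:Z - 1) by rewrite hq; ring.
rewrite mulzK; last by lia.
rewrite divzMDl; last by lia.
rewrite divz_small; first by ring.
apply/andP; split; lia.
Qed.

Lemma K_up n b z : (1 < n)%N -> (n%:Z %| z - b + 1)%Z ->
  Kf n b (z + 2) = Kf n b z + 1.
Proof.
move=> n1 /dvdzP [q hq]; rewrite /Kf.
have -> : z + 2 - b - 1 = q * n%:Z by rewrite -hq; ring.
have -> : z - b - 1 = (q - 1) * n%:Z + (n%:Z - 2).
  have ez : z = q * n%:Z + b - 1 by rewrite -hq; ring.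
  rewrite ez; ring.
rewrite mulzK; last by lia.
rewrite divzMDl; last by lia.
rewrite divz_small; first by ring.
apply/andP; split; lia.
Qed.

Lemma K_mono n b z1 z2 : (0 < n)%N -> z1 <= z2 -> Kf n b z1 <= Kf n b z2.
Proof.
move=> n0 h; rewrite /Kf; apply: lez_pdiv2r => //; lia.
Qed.

Lemma K_per n b z : (0 < n)%N ->
  Kf n b (z + (n * n.-1)%N%:Z) = Kf n b z + (n.-1)%:Z.
Proof.
move=> n0; rewrite /Kf.
have -> : z + (n * n.-1)%N%:Z - b - 1 = (n.-1)%:Z * n%:Z + (z - b - 1).
  rewrite PoszM mulrC. ring.
rewrite divzMDl; first by rewrite addrC.
lia.
Qed.

Lemma core n b (x : nat -> int) :
 (1 < n)%N ->
 (forall s, x (s + n * n.-1)%N = x s) ->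
 (forall s, x s.+1 = x s \/ (x s.+1 = x s + 1 /\ (n%:Z %| x s + s%:Z - b + 1)%Z)
            \/ (x s.+1 = x s - 1 /\ (n%:Z %| x s + s%:Z - b)%Z)) ->
 forall t m, (m <= n * n.-1)%N -> x (t + m)%N - x t <= n%:Z - 2.
Proof.
move=> n1 hper hstep t m hm.
have n0 : (0 < n)%N by lia.
set N := (n * n.-1)%N in hper hm *.
pose z s := x s + s%:Z.
pose psi s := x s - Kf n b (z s).
have nodiv : forall w : int, w = 1 -> ~ (n%:Z %| w)%Z by move=> w ->; rewrite dvdz1; lia.
have zstep : forall s, z s <= z s.+1.
  move=> s; rewrite /z; case: (hstep s) => [->|[[-> _]|[-> _]]]; lia.
have zmono : forall s d, z s <= z (s + d)%N.
  move=> s; elim=> [|d ih]; first by rewrite addn0.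
  apply: le_trans ih _; rewrite addnS; exact: zstep.
have psistep : forall s, psi s.+1 <= psi s /\
    ((n%:Z %| z s - b)%Z -> psi s.+1 <= psi s - 1).
  move=> s; rewrite /psi /z.
  case: (hstep s) => [e|[[e hd]|[e hd]]]; rewrite e.
  - have -> : x s + s.+1%:Z = (x s + s%:Z) + 1 by lia.
    have h : x s + s%:Z <= x s + s%:Z + 1 by lia.
    have := K_mono n b _ _ n0 h.
    split; first by lia.
    by move=> hd; rewrite K_down //; lia.
  - have -> : x s + 1 + s.+1%:Z = (x s + s%:Z) + 2 by lia.
    rewrite K_up //; split; first by lia.
    move=> hd'; exfalso.
    have e1 : (x s + s%:Z - b + 1) - (x s + s%:Z - b) = 1 by ring.
    exact: (nodiv _ e1 (rpredB hd hd')).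
  - have -> : x s - 1 + s.+1%:Z = x s + s%:Z by lia.
    split; lia.
have psimono : forall s d, psi (s + d)%N <= psi s.
  move=> s; elim=> [|d ih]; first by rewrite addn0.
  apply: le_trans _ ih; rewrite addnS; exact: (psistep _).1.
have xdown : forall s, x s.+1 < x s -> (n%:Z %| z s - b)%Z.
  move=> s; case: (hstep s) => [->|[[-> _]|[_ hd] _]]; [lia|lia|].
  by rewrite /z.
have zper : z (t + N)%N = z t + N%:Z by rewrite /z hper PoszD addrA.
have Kper : Kf n b (z (t + N)%N) = Kf n b (z t) + (n.-1)%:Z by rewrite zper K_per.
have descent : forall d, x (t + m + d)%N < x (t + m)%N ->
    exists s, [/\ (t + m <= s)%N, (s < t + m + d)%N & x s.+1 < x s].
  elim=> [|d ih]; first by rewrite addn0; lia.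
  move=> h.
  case: (ltrP (x (t + m + d)%N) (x (t + m)%N)) => h2.
    have [s [h1 h3 h4]] := ih h2; exists s; split => //; lia.
  exists (t + m + d)%N; split; [lia|lia|].
  rewrite -addnS; lia.
rewrite leNgt; apply/negP => hA.
have hA' : n%:Z - 1 <= x (t + m)%N - x t by lia.
have m0 : (0 < m)%N.
  case: m hm hA hA' {descent} => [|m'] // _ _; rewrite addn0; lia.
have p1 := psimono t m.
have Km : Kf n b (z (t + m)%N) <= Kf n b (z (t + N)%N).
  apply: K_mono => //.
  have -> : (t + N = t + m + (N - m))%N by lia.
  exact: zmono.
case: (boolP (n%:Z %| z t - b)%Z) => hdt.
  have p2 := (psistep t).2 hdt.
  have p3 := psimono t.+1 m.-1.
  have e : (t.+1 + m.-1 = t + m)%N by lia.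
  rewrite e in p3.
  move: p1 p2 p3 Km Kper hA'; rewrite /psi; lia.
have hx : x (t + m + (N - m))%N < x (t + m)%N.
  have -> : (t + m + (N - m) = t + N)%N by lia.
  rewrite hper; lia.
have [s [h1 h2 h3]] := descent _ hx.
have hds := xdown s h3.
have zs1 : z (t + m)%N <= z s.
  have -> : s = (t + m + (s - (t + m)))%N by lia.
  exact: zmono.
have zs2 : z s.+1 <= z (t + N)%N.
  have -> : (t + N = s.+1 + (t + N - s.+1))%N by lia.
  exact: zmono.
have zs3 : z s <= z s.+1 := zstep s.
have zne : z s != z (t + N)%N.
  apply/negP => /eqP e.
  have hN : (n%:Z %| N%:Z)%Z by apply/dvdzP; exists (n.-1)%:Z; rewrite /N PoszM mulrC.
  have := rpredB hds hN.
  rewrite e zper (_ : z t + N%:Z - b - N%:Z = z t - b); last by ring.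
  by move=> h; move/negP: hdt.
have zlt : z s + 1 <= z (t + N)%N by move: zne zs2 zs3; lia.
have K1 : Kf n b (z s + 1) = Kf n b (z s) + 1 := K_down n b (z s) n1 hds.
have K2 : Kf n b (z s + 1) <= Kf n b (z (t + N)%N) := K_mono n b _ _ n0 zlt.
have K3 := K_mono n b _ _ n0 zs1.
move: p1 K1 K2 K3 Kper hA'; rewrite /psi; lia.
Qed.


Lemma letter_per n u j : letter n u (j + (n * n.-1)%N%:Z) = letter n u j.
Proof.
rewrite /letter.
have -> : j + (n * n.-1)%N%:Z - 1 = (j - 1) + (n * n.-1)%N%:Z by ring.
by rewrite modzDr.
Qed.

Lemma s_aff_invol n i y : (1 < n)%N -> (i < n)%N -> s_aff n i (s_aff n i y) = y.
Proof.
move=> n1 ilt.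
have n0 : n%:Z != 0 by lia.
have hi : (i.+1 %% n)%N != i.
  case: (ltnP i.+1 n) => h; first by rewrite modn_small //; lia.
  have -> : i.+1 = n by lia.
  by rewrite modnn; lia.
have mD1 : forall w : int, ((w + 1) %% n%:Z)%Z = (((w %% n%:Z)%Z + 1) %% n%:Z)%Z.
  by move=> w; rewrite modzDml.
have mB1 : forall w : int, ((w - 1) %% n%:Z)%Z = (((w %% n%:Z)%Z - 1) %% n%:Z)%Z.
  by move=> w; rewrite modzDml.
rewrite /s_aff.
have [h1|h1] := eqVneq (y %% n%:Z)%Z i%:Z.
  rewrite mD1 h1 -PoszD addn1 modz_nat.
  have -> : ((i.+1 %% n)%N%:Z == i%:Z) = false by apply/negP => /eqP [] /eqP; rewrite (negbTE hi).
  by rewrite eqxx addrK.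
have [h2|h2] := eqVneq (y %% n%:Z)%Z (i.+1 %% n)%N%:Z.
  rewrite mB1 h2.
  have -> : (((i.+1 %% n)%N%:Z - 1) %% n%:Z)%Z = i%:Z.
    rewrite -modz_nat.
    have -> : ((i.+1%:Z %% n%:Z)%Z - 1 = i.+1%:Z - 1 %[mod n%:Z])%Z by rewrite modzDml.
    have -> : i.+1%:Z - 1 = i%:Z by lia.
    by rewrite modz_nat modn_small.
  by rewrite eqxx subrK.
by rewrite (negbTE h1) (negbTE h2).
Qed.

Lemma letter_invol n u j y : (1 < n)%N -> letter n u j (letter n u j y) = y.
Proof.
move=> n1; rewrite /letter.
case: ifP => // _; apply: s_aff_invol => //.
by rewrite ltn_mod; lia.
Qed.

Lemma word_prod_peel n u a m x :
  word_prod n u a m.+1 x = word_prod n u a m (letter n u (a + m%:Z) x).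
Proof.
elim: m a => [|m ih] a; first by rewrite /= addr0.
change (letter n u a (word_prod n u (a+1) m.+1 x) =
  letter n u a (word_prod n u (a+1) m (letter n u (a + m.+1%:Z) x))).
rewrite ih (_ : a + 1 + m%:Z = a + m.+1%:Z) //; lia.
Qed.

Lemma rot_step n u a : (1 < n)%N ->
  ((forall x, word_prod n u a (n * n.-1) x = x) <->
   (forall x, word_prod n u (a + 1) (n * n.-1) x = x)).
Proof.
move=> n1.
have [N' eN] : exists N', (n * n.-1)%N = N'.+1 by exists (n * n.-1).-1; lia.
rewrite eN.
have hl : forall x, word_prod n u (a + 1) N'.+1 x = word_prod n u (a + 1) N' (letter n u a x).
  move=> x; rewrite word_prod_peel.
  have -> : a + 1 + N'%:Z = a + (n * n.-1)%N%:Z by rewrite eN; lia.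
  by rewrite letter_per.
split=> H x.
- have W : forall y, word_prod n u (a + 1) N' y = letter n u a y.
    move=> y; rewrite -[LHS](letter_invol n u a _ n1).
    by have := H y => /= ->.
  by rewrite hl W letter_invol.
- have W : forall y, word_prod n u (a + 1) N' y = letter n u a y.
    move=> y; have := H (letter n u a y); rewrite hl letter_invol //.
  by rewrite /= W letter_invol.
Qed.

Lemma rot_all n u : (1 < n)%N ->
  (forall x, word_prod n u 1 (n * n.-1) x = x) ->
  forall a x, word_prod n u a (n * n.-1) x = x.
Proof.
move=> n1 H a.
have pos : forall k : nat, forall x, word_prod n u (1 + k%:Z) (n * n.-1) x = x.
  elim=> [|k ih]; first by rewrite addr0.
  have -> : 1 + k.+1%:Z = (1 + k%:Z) + 1 by lia.
  exact: (proj1 (rot_step n u _ n1) ih).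
have neg : forall k : nat, forall x, word_prod n u (1 - k%:Z) (n * n.-1) x = x.
  elim=> [|k ih]; first by rewrite subr0.
  apply: (proj2 (rot_step n u _ n1)).
  have -> : 1 - k.+1%:Z + 1 = 1 - k%:Z by lia.
  exact: ih.
case: (lerP 1 a) => h.
  have -> : a = 1 + (absz (a - 1))%:Z by rewrite gez0_abs; lia.
  exact: pos.
have -> : a = 1 - (absz (1 - a))%:Z by rewrite gez0_abs; lia.
exact: neg.
Qed.

Fixpoint traj (n : nat) (u : seq bool) (e : int) (y : int) (s : nat) : int :=
  match s with
  | 0 => y
  | s'.+1 => letter n u (e - s'%:Z) (traj n u e y s')
  end.

Lemma traj_wp n u e y m : traj n u e y m = word_prod n u (e - m%:Z + 1) m y.
Proof.
elim: m => [|m ih] //=.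
rewrite ih; congr (letter _ _ _ (word_prod _ _ _ _ _)); lia.
Qed.

Lemma traj_add n u e y s d : traj n u e y (s + d) = traj n u (e - s%:Z) (traj n u e y s) d.
Proof.
elim: d => [|d ih]; first by rewrite addn0.
rewrite addnS /= ih; congr (letter _ _ _ _); lia.
Qed.

Lemma modz_NN (n : nat) (w : int) : (0 < n)%N ->
  (((w %% (n * n.-1)%N%:Z)%Z %% n%:Z)%Z = (w %% n%:Z)%Z).
Proof.
move=> n0.
rewrite [in RHS](divz_eq w (n * n.-1)%N%:Z).
have -> : ((w %/ (n * n.-1)%N%:Z)%Z * (n * n.-1)%N%:Z) =
   ((w %/ (n * n.-1)%N%:Z)%Z * (n.-1)%:Z) * n%:Z by rewrite PoszM; ring.
by rewrite modzMDl.
Qed.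

Lemma letter_step n u e s y : (1 < n)%N ->
  letter n u (e - s%:Z) y = y \/
  (letter n u (e - s%:Z) y = y + 1 /\ (n%:Z %| y + s%:Z - e + 1)%Z) \/
  (letter n u (e - s%:Z) y = y - 1 /\ (n%:Z %| y + s%:Z - e)%Z).
Proof.
move=> n1.
have n0 : (0 < n)%N by lia.
have N0 : (n * n.-1)%N%:Z != 0 by rewrite PoszM; apply: mulf_neq0; lia.
rewrite /letter /=.
set w := e - s%:Z - 1.
set jj := absz (w %% (n * n.-1)%N%:Z)%Z.
have hi : ((jj %% n)%N)%:Z = (w %% n%:Z)%Z.
  rewrite -modz_nat /jj gez0_abs; last exact: modz_ge0.
  exact: modz_NN.
case: ifP => _; last by left.
rewrite /s_aff.
have [h1|h1] := eqVneq (y %% n%:Z)%Z (jj %% n)%N%:Z.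
  right; left; split => //.
  have : (y == w %[mod n%:Z])%Z by rewrite h1 hi.
  rewrite eqz_mod_dvd (_ : y - w = y + s%:Z - e + 1) //; rewrite /w; ring.
have [h2|h2] := eqVneq (y %% n%:Z)%Z ((jj %% n).+1 %% n)%N%:Z.
  right; right; split => //.
  have : (y == w + 1 %[mod n%:Z])%Z.
    rewrite h2 -modz_nat -addn1 PoszD hi.
    by rewrite modzDml.
  rewrite eqz_mod_dvd (_ : y - (w + 1) = y + s%:Z - e) //; rewrite /w; ring.
by left.
Qed.

Theorem lemma5p12 (n : nat) (u : seq bool) :
  (2 <= n)%N ->
  size u = (n * n.-1)%N ->
  (forall x : int, word_prod n u 1 (n * n.-1) x = x) ->
  forall k a b : int,
    0 <= b - a -> b - a < (n * n.-1)%:Z ->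
    `|word_prod n u a (absz (b - a)%R).+1 k - k| <= n%:Z - 2.
Proof.
move=> n1 hsize hid k a b h0 hN.
have n0 : (0 < n)%N by lia.
set M := (absz (b - a)).+1.
have eM : M%:Z = b - a + 1 by rewrite /M -addn1 PoszD gez0_abs.
have ea : a = b - M%:Z + 1 by rewrite eM; ring.
have -> : word_prod n u a M k = traj n u b k M by rewrite traj_wp -ea.
pose x s := traj n u b k s.
have hper : forall s, x (s + n * n.-1)%N = x s.
  move=> s; rewrite /x traj_add traj_wp; exact: rot_all.
have hstep : forall s, x s.+1 = x s \/ (x s.+1 = x s + 1 /\ (n%:Z %| x s + s%:Z - b + 1)%Z)
            \/ (x s.+1 = x s - 1 /\ (n%:Z %| x s + s%:Z - b)%Z).
  move=> s; rewrite /x /=; exact: letter_step.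
have hM : (M <= n * n.-1)%N.
  have : M%:Z <= (n * n.-1)%N%:Z by rewrite eM; lia.
  by rewrite lez_nat.
have up := core n b x n1 hper hstep 0 M hM.
have lo := core n b x n1 hper hstep M (n * n.-1 - M) (leq_subr _ _).
rewrite (subnKC hM) in lo.
have xN : x (n * n.-1)%N = x 0%N by have := hper 0%N; rewrite add0n.
rewrite xN in lo.
rewrite add0n in up.
have x0 : x 0%N = k by [].
change (`|x M - k| <= n%:Z - 2).
rewrite x0 in up lo.
rewrite ler_norml; apply/andP; split; lia.
Qed.
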